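(* Let $E$ be a finite set and let $\tau:2^{E}\rightarrow 2^{E}$ be a closure operator. Define $V:2^{E}\rightarrow 2^{E}$ by $V(X)=E-\tau(X)$. Then $(E,V)$ is a violator space.
   Context: A closure operator on $E$ is a map $\tau:2^E\to 2^E$ satisfying, for all $X,Y\subseteq E$: (C1) $X\subseteq\tau(X)$; (C2) $X\subseteq Y\Rightarrow \tau(X)\subseteq\tau(Y)$; (C3) $\tau(\tau(X))=\tau(X)$. A violator space is a pair $(H,V)$ with $H$ a finite set and $V:2^H\to 2^H$ such that (Consistency) $G\cap V(G)=\emptyset$ for all $G\subseteq H$, and (Locality) for all $F\subseteq G\subseteq H$ with $G\cap V(F)=\emptyset$ we have $V(G)=V(F)$. *)

(* Defs.v *)
From mathcomp Require Import all_boot.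
Set Implicit Arguments. Unset Strict Implicit. Unset Printing Implicit Defensive.

Definition closure_operator (E : finType) (tau : {set E} -> {set E}) : Prop :=
  [/\ (forall X : {set E}, X \subset tau X),
      (forall X Y : {set E}, X \subset Y -> tau X \subset tau Y)
    & (forall X : {set E}, tau (tau X) = tau X)].

Definition violator_space (H : finType) (V : {set H} -> {set H}) : Prop :=
  (forall G : {set H}, G :&: V G = set0) /\
  (forall F G : {set H}, F \subset G -> G :&: V F = set0 -> V G = V F).

(* Main.v *)
Require Import Defs.
From mathcomp Require Import all_boot.

Theorem mainTheorem1 (E : finType) (tau : {set E} -> {set E}) :
  closure_operator tau ->
  violator_space (fun X : {set E} => [set: E] :\: tau X).
Proof.
case=> ext mono idem; split.
- move=> G; apply/setP=> x; rewrite !inE.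
  case: (boolP (x \in G)) => //= xG.
  by rewrite (subsetP (ext G) x xG).
- move=> F G FG H.
  have GF : G \subset tau F.
    apply/subsetP=> x xG; apply/negPn/negP=> nx.
    have : x \in G :&: ([set: E] :\: tau F) by rewrite !inE xG nx.
    by rewrite H inE.
  have e : tau G = tau F.
    apply/eqP; rewrite eqEsubset; apply/andP; split.
      by rewrite -(idem F); apply: mono.
    by apply: mono.
  by rewrite e.
Qed.
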